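(* Let $f_1^0, f_2^0, g_1^0, x^0\in\mathbb{R}$ with $\Delta := f_1^0-f_2^0>0$ and let $N\ge1$ be an integer. Let $\mu_1,\mu_2\ge0$ and $\max\{\mu_1,\mu_2\}<L_1<L_2<\infty$. Let $p_2 := L_1^{-1}\big(1+\frac{L_1^{-1}-L_2^{-1}}{\mu_2^{-1}-L_2^{-1}}\big)+L_1^{-1}\frac{L_1-\mu_2}{L_2-\mu_2}$ (with $1/0$ interpreted as $\infty$ when $\mu_2=0$) and $U:=-\sqrt{\frac{2\Delta}{p_2N}}$. Define $f_1(x)=\frac12L_1(x-x^0)^2+g_1^0(x-x^0)+f_1^0$ and, for $k=0,\dots,N$: $x^k=x^0-k\frac{U}{L_1}$, $g_2^k=g_1^0-(k+1)U$, $f_2^k=f_1(x^k)-\frac{N-k}{N}\Delta$, and for $k=0,\dots,N-1$: $\bar x^k=x^k-\frac{L_2-L_1}{L_2-\mu_2}\frac{U}{L_1}$. Define $f_2:\mathbb{R}\to\mathbb{R}$ by $f_2(x)=\frac12\mu_2(x-x^0)^2+g_2^0(x-x^0)+f_2^0$ for $x\le x^0$; $f_2(x)=\frac12\mu_2(x-x^k)^2+g_2^k(x-x^k)+f_2^k$ for $x\in[x^k,\bar x^k]$; $f_2(x)=\frac12L_2(x-x^{k+1})^2+g_2^{k+1}(x-x^{k+1})+f_2^{k+1}$ for $x\in[\bar x^k,x^{k+1}]$ ($k=0,\dots,N-1$); $f_2(x)=\frac12\mu_2(x-x^N)^2+g_2^N(x-x^N)+f_2^N$ for $x\ge x^N$.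 Then $f_1\in\mathcal{F}_{\mu_1,L_1}$, $f_2\in\mathcal{F}_{\mu_2,L_2}$, and performing $N$ iterations of DCA on $F=f_1-f_2$ starting from $x^0$ yields $$\tfrac12\min_{0\le k\le N}|\nabla f_1(x^k)-\nabla f_2(x^k)|^2=\frac{\Delta}{p_2N}.$$
   Context: For $\mu\in\mathbb{R}$ and $L\in(\mu,\infty]$, $\mathcal{F}_{\mu,L}$ is the class of proper lower semicontinuous functions $f$ with $f-\frac{\mu}{2}|\cdot|^2$ convex and $\frac{L}{2}|\cdot|^2-f$ convex (when $L<\infty$). A DCA iteration from $x$ on $F=f_1-f_2$ selects $g_2\in\partial f_2(x)$ and $x^+\in\operatorname{argmin}_w\{f_1(w)-g_2w\}$, i.e. (for differentiable $f_1$) $\nabla f_1(x^+)=g_2$. *)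

(* Defs.v *)
From Stdlib Require Import Reals Lra.
From Coquelicot Require Import Coquelicot.
Open Scope R_scope.

Definition convex_fun (f : R -> R) : Prop :=
  forall x y t, 0 <= t <= 1 ->
    f (t * x + (1 - t) * y) <= t * f x + (1 - t) * f y.

(** Lower semicontinuity (f is real-valued, hence proper). *)
Definition lsc (f : R -> R) : Prop :=
  forall x eps, 0 < eps -> exists delta, 0 < delta /\
    forall y, Rabs (y - x) < delta -> f x - eps < f y.

Definition F_class (mu L : R) (f : R -> R) : Prop :=
  lsc f /\
  convex_fun (fun x => f x - mu / 2 * x ^ 2) /\
  convex_fun (fun x => L / 2 * x ^ 2 - f x).

Definition subgrad (f : R -> R) (x g : R) : Prop :=
  forall y, f x + g * (y - x) <= f y.

Definition dca_step (f1 f2 : R -> R) (x xp : R) : Prop :=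
  exists g2, subgrad f2 x g2 /\
    forall w, f1 xp - g2 * xp <= f1 w - g2 * w.

Fixpoint min_upto (n : nat) (h : nat -> R) : R :=
  match n with
  | O => h O
  | S m => Rmin (min_upto m h) (h (S m))
  end.

Definition p2 (mu2 L1 L2 : R) : R :=
  / L1 * (1 + (if Req_EM_T mu2 0 then 0   (* 1/mu2 = +oo *)
               else (/ L1 - / L2) / (/ mu2 - / L2)))
  + / L1 * ((L1 - mu2) / (L2 - mu2)).

Definition Ustep (f10 f20 mu2 L1 L2 : R) (N : nat) : R :=
  - sqrt (2 * (f10 - f20) / (p2 mu2 L1 L2 * INR N)).

Definition f1fun (f10 g10 x0 L1 : R) (x : R) : R :=
  1 / 2 * L1 * (x - x0) ^ 2 + g10 * (x - x0) + f10.

Section Construction.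
Variables (f10 f20 g10 x0 mu2 L1 L2 : R) (N : nat).

Let Delta := f10 - f20.
Let U := Ustep f10 f20 mu2 L1 L2 N.

Definition xk (k : nat) : R := x0 - INR k * (U / L1).
Definition g2k (k : nat) : R := g10 - (INR k + 1) * U.
Definition f2k (k : nat) : R :=
  f1fun f10 g10 x0 L1 (xk k) - (INR N - INR k) / INR N * Delta.
Definition xbark (k : nat) : R := xk k - (L2 - L1) / (L2 - mu2) * (U / L1).

Definition mu_piece (k : nat) (x : R) : R :=
  1 / 2 * mu2 * (x - xk k) ^ 2 + g2k k * (x - xk k) + f2k k.
Definition L_piece (k : nat) (x : R) : R :=
  1 / 2 * L2 * (x - xk k) ^ 2 + g2k k * (x - xk k) + f2k k.

(** Scan the pieces left to right, for x > x^0: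
    [x^k, xbar^k] -> mu_piece k ; [xbar^k, x^{k+1}] -> L_piece (k+1);
    x >= x^N -> mu_piece N. *)
Fixpoint f2_aux (k fuel : nat) (x : R) : R :=
  match fuel with
  | O => mu_piece k x
  | S fuel' =>
      if Rle_dec x (xbark k) then mu_piece k x
      else if Rle_dec x (xk (S k)) then L_piece (S k) x
      else f2_aux (S k) fuel' x
  end.

Definition f2fun (x : R) : R :=
  if Rle_dec x x0 then mu_piece 0 x else f2_aux 0 N x.

End Construction.

(* Main.v *)
Require Import Defs.
From Stdlib Require Import Reals Lra Psatz.
From Coquelicot Require Import Coquelicot.
Open Scope R_scope.

Definition Rq (b c x : R) : R :=
  if Rle_dec x b then 0 else if Rle_dec x c then (x-b)^2/2
  else (c-b)^2/2 + (c-b)*(x-c).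
Definition clq (b c x : R) : R :=
  if Rle_dec x b then 0 else if Rle_dec x c then x - b else c - b.

Lemma Rq_bound b c x p : b <= c ->
  0 <= Rq b c x - Rq b c p - clq b c p * (x-p) <= (x-p)^2/2.
Proof.
  intros H; unfold Rq, clq.
  pose proof (pow2_ge_0 (x-p)); pose proof (pow2_ge_0 (x-b)); pose proof (pow2_ge_0 (p-b));
  pose proof (pow2_ge_0 (x-c)); pose proof (pow2_ge_0 (p-c));
  repeat destruct (Rle_dec _ _); split; nra.
Qed.

Lemma clq_lip b c x y : b <= c -> x <= y ->
  0 <= clq b c y - clq b c x <= y - x.
Proof.
  intros H Hxy; unfold clq.
  repeat destruct (Rle_dec _ _); split; lra.
Qed.

Fixpoint Sq (b c : nat -> R) (n : nat) (x : R) : R :=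
  match n with O => 0 | S m => Sq b c m x + Rq (b m) (c m) x end.
Fixpoint Cq (b c : nat -> R) (n : nat) (x : R) : R :=
  match n with O => 0 | S m => Cq b c m x + clq (b m) (c m) x end.

Lemma Sq_bound b c (hbc : forall j, b j <= c j) n x p :
  0 <= Sq b c n x - Sq b c n p - Cq b c n p * (x-p) <= INR n * ((x-p)^2/2).
Proof.
  induction n as [|n IH]; simpl Sq; simpl Cq.
  - simpl; lra.
  - rewrite S_INR. pose proof (Rq_bound (b n) (c n) x p (hbc n)). lra.
Qed.

Lemma chain_cb b c (hbc : forall j, b j <= c j) (hcb : forall j, c j <= b (S j)) :
  forall j k, (j < k)%nat -> c j <= b k.
Proof.
  intros j k Hjk. induction Hjk.
  - apply hcb.
  - specialize (hbc m); specialize (hcb m); lra.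
Qed.

Lemma chain_bb b c (hbc : forall j, b j <= c j) (hcb : forall j, c j <= b (S j)) :
  forall j k, (j <= k)%nat -> b j <= b k.
Proof.
  intros j k Hjk. induction Hjk.
  - lra.
  - specialize (hbc m); specialize (hcb m); lra.
Qed.

Lemma Cq_const b c (hbc0 : forall j, b j <= c j) n x y : (forall j, (j < n)%nat -> c j <= x) -> x <= y ->
  Cq b c n y = Cq b c n x.
Proof.
  intros H Hxy. induction n as [|n IH]; simpl; [reflexivity|].
  rewrite IH by (intros; apply H; lia).
  f_equal. specialize (H n (Nat.lt_succ_diag_r n)). unfold clq.
  pose proof (hbc0 n). repeat destruct (Rle_dec _ _); lra.
Qed.

Lemma Cq_lip b c (hbc : forall j, b j <= c j) (hcb : forall j, c j <= b (S j)) n :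
  forall x y, x <= y -> Cq b c n y - Cq b c n x <= y - x.
Proof.
  induction n as [|n IH]; intros x y Hxy; simpl; [lra|].
  assert (C1 : forall x y, x <= y -> y <= b n ->
     Cq b c n y + clq (b n) (c n) y - (Cq b c n x + clq (b n) (c n) x) <= y - x).
  { intros u v Huv Hv. assert (clq (b n) (c n) v = 0) by (unfold clq; destruct (Rle_dec v (b n)); lra).
    assert (clq (b n) (c n) u = 0) by (unfold clq; destruct (Rle_dec u (b n)); lra).
    specialize (IH u v Huv). lra. }
  assert (C2 : forall x y, x <= y -> b n <= x ->
     Cq b c n y + clq (b n) (c n) y - (Cq b c n x + clq (b n) (c n) x) <= y - x).
  { intros u v Huv Hu. rewrite (Cq_const b c hbc n u v); [|intros j Hj; pose proof (chain_cb b c hbc hcb j n Hj); lra|lra].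
    pose proof (clq_lip (b n) (c n) u v (hbc n) Huv). lra. }
  destruct (Rle_dec y (b n)); [apply C1; lra|].
  destruct (Rle_dec (b n) x); [apply C2; lra|].
  pose proof (C1 x (b n) ltac:(lra) ltac:(lra)).
  pose proof (C2 (b n) y ltac:(lra) ltac:(lra)). lra.
Qed.

Lemma Sq_stop b c (hbc : forall j, b j <= c j) (hcb : forall j, c j <= b (S j)) n k x :
  (k <= n)%nat -> x <= b k -> Sq b c n x = Sq b c k x.
Proof.
  intros Hk Hx. induction Hk; [reflexivity|]. simpl. rewrite IHHk.
  pose proof (chain_bb b c hbc hcb k m Hk).
  unfold Rq. destruct (Rle_dec x (b m)); [lra|lra].
Qed.

Lemma Cq_stop b c (hbc : forall j, b j <= c j) (hcb : forall j, c j <= b (S j)) n k x :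
  (k <= n)%nat -> x <= b k -> Cq b c n x = Cq b c k x.
Proof.
  intros Hk Hx. induction Hk; [reflexivity|]. simpl. rewrite IHHk.
  pose proof (chain_bb b c hbc hcb k m Hk).
  unfold clq. destruct (Rle_dec x (b m)); [lra|lra].
Qed.

Lemma quad_deriv f d x K :
  (forall y, Rabs (f y - f x - d*(y-x)) <= K*(y-x)^2) -> is_derive f x d.
Proof.
  intros H. apply is_derive_Reals. intros eps Heps.
  assert (HK : 0 < Rabs K + 1) by (pose proof (Rabs_pos K); lra).
  exists (mkposreal (eps / (Rabs K + 1)) ltac:(apply Rdiv_lt_0_compat; lra)).
  simpl. intros h Hh Hlt.
  specialize (H (x + h)).
  replace (x + h - x) with h in H by ring.
  replace ((f (x + h) - f x) / h - d) with ((f (x + h) - f x - d * h) / h) by (field; auto).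
  rewrite Rabs_div by auto.
  apply (Rmult_lt_reg_r (Rabs h)); [apply Rabs_pos_lt; auto|].
  unfold Rdiv. rewrite Rmult_assoc, Rinv_l, Rmult_1_r by (apply Rabs_no_R0; auto).
  eapply Rle_lt_trans; [apply H|].
  assert (Hh2 : h^2 = Rabs h * Rabs h) by (rewrite <- Rabs_mult; rewrite Rabs_right; [ring|nra]).
  rewrite Hh2.
  assert (Rabs h * (Rabs K + 1) < eps).
  { apply (Rmult_lt_compat_r (Rabs K + 1)) in Hlt; [|lra].
    unfold Rdiv in Hlt. rewrite Rmult_assoc, Rinv_l, Rmult_1_r in Hlt by lra. lra. }
  pose proof (Rabs_pos_lt h Hh). pose proof (Rle_abs K). nra.
Qed.

Lemma quad_lsc f d x K :
  (forall y, Rabs (f y - f x - d*(y-x)) <= K*(y-x)^2) ->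
  forall eps, 0 < eps -> exists delta, 0 < delta /\
    forall y, Rabs (y - x) < delta -> f x - eps < f y.
Proof.
  intros H eps Heps.
  set (M := Rabs d + Rabs K + 1).
  assert (HM : 0 < M) by (unfold M; pose proof (Rabs_pos d); pose proof (Rabs_pos K); lra).
  exists (Rmin 1 (eps / M)). split.
  { apply Rmin_glb_lt; [lra|apply Rdiv_lt_0_compat; lra]. }
  intros y Hy. specialize (H y).
  assert (H1 : Rabs (y - x) < 1) by (eapply Rlt_le_trans; [apply Hy|apply Rmin_l]).
  assert (H2 : Rabs (y - x) < eps / M) by (eapply Rlt_le_trans; [apply Hy|apply Rmin_r]).
  assert (H3 : Rabs (y - x) * M < eps).
  { apply (Rmult_lt_compat_r M) in H2; [|lra]. unfold Rdiv in H2.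
    rewrite Rmult_assoc, Rinv_l, Rmult_1_r in H2 by lra. lra. }
  assert (Ht2 : (y - x)^2 = Rabs (y-x) * Rabs (y-x)) by (rewrite <- Rabs_mult, Rabs_right; [ring|apply Rle_ge, Rle_0_sqr]).
  rewrite Ht2 in H.
  assert (Hd : Rabs (d * (y - x)) = Rabs d * Rabs (y-x)) by (apply Rabs_mult).
  set (t := Rabs (y - x)) in *.
  pose proof (Rabs_triang (f y - f x - d * (y - x)) (d * (y - x))) as Ht.
  replace (f y - f x - d * (y - x) + d * (y - x)) with (f y - f x) in Ht by ring.
  pose proof (Rabs_pos t). pose proof (Rle_abs K). pose proof (Rabs_pos d).
  pose proof (Rabs_pos (f y - f x - d * (y - x))).
  assert (0 <= t) by (apply Rabs_pos).
  assert (K * (t*t) <= Rabs K * t).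
  { apply Rle_trans with (Rabs K * (t*t)). apply Rmult_le_compat_r; [apply Rle_0_sqr|auto].
    apply Rmult_le_compat_l; [apply Rabs_pos|]. nra. }
  unfold M in H3.
  assert (t * (Rabs d + Rabs K + 1) = Rabs d * t + Rabs K * t + t) by ring.
  assert (Rabs (f y - f x) < eps) by lra.
  pose proof (Rle_abs (f x - f y)) as Hfin. rewrite Rabs_minus_sym in Hfin. lra.
Qed.

Lemma support_convex (phi d : R -> R) :
  (forall x p, phi p + d p * (x - p) <= phi x) -> convex_fun phi.
Proof.
  intros H x y t Ht. set (z := t * x + (1 - t) * y).
  pose proof (H x z) as H1. pose proof (H y z) as H2.
  assert (t * (phi z + d z * (x - z)) <= t * phi x) by (apply Rmult_le_compat_l; lra).
  assert ((1-t) * (phi z + d z * (y - z)) <= (1-t) * phi y) by (apply Rmult_le_compat_l; lra).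
  assert (t * (phi z + d z * (x - z)) + (1-t) * (phi z + d z * (y - z)) = phi z) by (unfold z; ring).
  lra.
Qed.

Lemma mono_convex (phi d : R -> R) :
  (forall x, is_derive phi x (d x)) -> (forall x y, x <= y -> d x <= d y) -> convex_fun phi.
Proof.
  intros Hd Hm. apply (support_convex phi d). intros x p.
  assert (Hc : forall z, continuity_pt phi z).
  { intros z. apply (derivable_continuous_pt phi z). exists (d z). apply (proj1 (is_derive_Reals _ _ _)), Hd. }
  destruct (MVT_gen phi p x d (fun z _ => Hd z) (fun z _ => Hc z)) as [c [Hc1 Hc2]].
  destruct (Rle_dec p x).
  - rewrite Rmin_left in Hc1 by lra. rewrite Rmax_right in Hc1 by lra.
    pose proof (Hm p c ltac:(lra)). nra.
  - rewrite Rmin_right in Hc1 by lra. rewrite Rmax_left in Hc1 by lra.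
    pose proof (Hm c p ltac:(lra)). nra.
Qed.

Lemma lin_zero e C : (forall t, e * t <= C * t^2) -> e = 0.
Proof.
  intros H. set (M := Rabs C + 1). assert (HM : 0 < M) by (unfold M; pose proof (Rabs_pos C); lra).
  specialize (H (e / (2 * M))).
  assert (H' : e * e * (2*M) <= C * e^2) .
  { apply (Rmult_le_compat_r (4*M*M)) in H; [|nra].
    replace (e * (e / (2 * M)) * (4 * M * M)) with (e*e*(2*M)) in H by (field; lra).
    replace (C * (e / (2 * M)) ^ 2 * (4 * M * M)) with (C * e^2) in H by (field; lra). exact H. }
  pose proof (Rle_abs C). unfold M in H'.
  assert (C * e^2 <= Rabs C * e^2) by (apply Rmult_le_compat_r; [apply pow2_ge_0|auto]).
  assert (Hz : e * e * (Rabs C + 2) <= 0) by nra.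
  assert (e * e <= 0).
  { pose proof (Rabs_pos C). apply (Rmult_le_reg_r (Rabs C + 2)); lra. }
  nra.
Qed.

Lemma min_upto_const n h c : (forall k, (k <= n)%nat -> h k = c) -> min_upto n h = c.
Proof.
  induction n as [|n IH]; intros H; simpl.
  - apply H; lia.
  - rewrite IH by (intros; apply H; lia). rewrite (H (S n)) by lia. unfold Rmin; destruct (Rle_dec c c); lra.
Qed.

Lemma Rq_full b c x : b <= c -> c <= x -> Rq b c x = (c-b)^2/2 + (c-b)*(x-c).
Proof. intros; unfold Rq; repeat destruct (Rle_dec _ _); try lra.
  - assert (x = c) by lra; assert (b = c) by lra; subst; field.
  - assert (x = c) by lra; subst; field. Qed.
Lemma Rq_mid b c x : b <= x -> x <= c -> Rq b c x = (x-b)^2/2.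
Proof. intros; unfold Rq; repeat destruct (Rle_dec _ _); try lra. assert (x = b) by lra; subst; field. Qed.
Lemma clq_full b c x : b <= c -> c <= x -> clq b c x = c - b.
Proof. intros; unfold clq; repeat destruct (Rle_dec _ _); lra. Qed.

Lemma p2_eq mu2 L1 L2 : 0 <= mu2 -> mu2 < L1 -> L1 < L2 ->
  p2 mu2 L1 L2 = (2*L1 + (mu2-L1)*((L2-L1)/(L2-mu2)))/L1^2.
Proof.
  intros H1 H2 H3. unfold p2. destruct (Req_EM_T mu2 0).
  - subst. field. lra.
  - replace ((/ L1 - / L2) / (/ mu2 - / L2)) with (mu2 * (L2-L1)/(L1*(L2-mu2))).
    + field. lra.
    + field. repeat split; lra.
Qed.

From Stdlib Require Import FunctionalExtensionality.

Theorem proposition6 (f10 f20 g10 x0 : R) (N : nat) (mu1 mu2 L1 L2 : R) :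
  0 < f10 - f20 ->
  (1 <= N)%nat ->
  0 <= mu1 -> 0 <= mu2 ->
  Rmax mu1 mu2 < L1 -> L1 < L2 ->
  let f1 := f1fun f10 g10 x0 L1 in
  let f2 := f2fun f10 f20 g10 x0 mu2 L1 L2 N in
  F_class mu1 L1 f1 /\
  F_class mu2 L2 f2 /\
  (forall y : nat -> R,
     y O = x0 ->
     (forall k, (k < N)%nat -> dca_step f1 f2 (y k) (y (S k))) ->
     (forall k, (k <= N)%nat -> ex_derive f1 (y k) /\ ex_derive f2 (y k)) /\
     1 / 2 * min_upto N (fun k => (Derive f1 (y k) - Derive f2 (y k)) ^ 2)
       = (f10 - f20) / (p2 mu2 L1 L2 * INR N)).
Proof.
  intros HD HN Hmu1 Hmu2 Hmax HL f1 f2.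
  assert (HmL1 : mu1 < L1) by (eapply Rle_lt_trans; [apply Rmax_l|exact Hmax]).
  assert (HmL2 : mu2 < L1) by (eapply Rle_lt_trans; [apply Rmax_r|exact Hmax]).
  assert (HNpos : 0 < INR N) by (apply lt_0_INR; lia).
  set (a := (L2-L1)/(L2-mu2)).
  assert (Ha0 : 0 < a) by (unfold a; apply Rdiv_lt_0_compat; lra).
  assert (Ha1 : a < 1).
  { unfold a; apply (Rmult_lt_reg_r (L2-mu2)); [lra|]. unfold Rdiv; rewrite Rmult_assoc, Rinv_l; lra. }
  assert (Haw : (L2 - mu2) * (1 - a) = L1 - mu2) by (unfold a; field; lra).
  set (P := p2 mu2 L1 L2).
  assert (HP : P * L1^2 = 2*L1 + (mu2 - L1)*a) by (unfold P, a; rewrite p2_eq by lra; field; lra).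
  assert (HPpos : 0 < P).
  { assert (0 < P * L1^2) by (rewrite HP; nra).
    assert (0 < L1^2) by nra. nra. }
  set (U := Ustep f10 f20 mu2 L1 L2 N).
  assert (Hz : 0 < 2*(f10-f20)/(P*INR N)) by (apply Rdiv_lt_0_compat; nra).
  assert (HU2 : U^2 = 2*(f10-f20)/(P*INR N)).
  { unfold U, Ustep. change (p2 mu2 L1 L2) with P.
    replace ((- sqrt (2 * (f10 - f20) / (P * INR N))) ^ 2) with (sqrt (2 * (f10 - f20) / (P * INR N)) ^ 2) by field.
    apply pow2_sqrt; lra. }
  assert (HUneg : U < 0).
  { unfold U, Ustep. change (p2 mu2 L1 L2) with P. pose proof (sqrt_lt_R0 _ Hz). lra. }
  set (h := - U / L1).
  assert (Hh : 0 < h) by (unfold h; apply Rdiv_lt_0_compat; lra).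
  assert (HUh : U = - (L1 * h)) by (unfold h; field; lra).
  assert (HDel : f10 - f20 = P * INR N * (L1*h)^2 / 2).
  { rewrite <- (Ropp_involutive (L1*h)), <- HUh.
    replace ((- U)^2) with (U^2) by field. rewrite HU2. field. split; lra. }
  assert (exk : forall k, xk f10 f20 x0 mu2 L1 L2 N k = x0 + INR k * h).
  { intros k. unfold xk. change (Ustep f10 f20 mu2 L1 L2 N) with U. unfold h. field. lra. }
  assert (eg : forall k, g2k f10 f20 g10 mu2 L1 L2 N k = g10 + (INR k + 1)*(L1*h)).
  { intros k. unfold g2k. change (Ustep f10 f20 mu2 L1 L2 N) with U. rewrite HUh. field. }
  assert (ef : forall k, f2k f10 f20 g10 x0 mu2 L1 L2 N k =
     1/2*L1*(INR k*h)^2 + g10*(INR k*h) + f10 - (INR N - INR k) * (P*L1^2) * h^2 / 2).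
  { intros k. unfold f2k, f1fun. rewrite exk. rewrite HDel. field. lra. }
  assert (exb : forall k, xbark f10 f20 x0 mu2 L1 L2 N k = x0 + INR k*h + a*h).
  { intros k. unfold xbark. rewrite exk. change (Ustep f10 f20 mu2 L1 L2 N) with U. rewrite HUh.
    unfold a. field. split; lra. }
  assert (emu : forall k x, mu_piece f10 f20 g10 x0 mu2 L1 L2 N k x =
     1/2*mu2*(x - (x0 + INR k*h))^2 + (g10 + (INR k+1)*(L1*h))*(x - (x0+INR k*h))
     + (1/2*L1*(INR k*h)^2 + g10*(INR k*h) + f10 - (INR N - INR k) * (P*L1^2) * h^2 / 2)).
  { intros k x. unfold mu_piece. rewrite exk, eg, ef. reflexivity. }
  assert (eL : forall k x, L_piece f10 f20 g10 x0 mu2 L1 L2 N k x =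
     1/2*L2*(x - (x0 + INR k*h))^2 + (g10 + (INR k+1)*(L1*h))*(x - (x0+INR k*h))
     + (1/2*L1*(INR k*h)^2 + g10*(INR k*h) + f10 - (INR N - INR k) * (P*L1^2) * h^2 / 2)).
  { intros k x. unfold L_piece. rewrite exk, eg, ef. reflexivity. }
  clearbody U h.
  set (w := (1-a)*h).
  pose (cl := fun (k:nat) (x:R) => INR k * w^2/2 + w * (INR k * (x - x0) - h * INR k * (INR k + 1)/2)).
  assert (emuc : forall k x, mu_piece f10 f20 g10 x0 mu2 L1 L2 N k x
     = mu_piece f10 f20 g10 x0 mu2 L1 L2 N 0 x + (L2-mu2) * cl k x).
  { intros k x. rewrite !emu. change (INR 0) with 0.
    assert (E : (L2-mu2) * cl k x = ((L2-mu2)*(1-a)) * (INR k*(1-a)*h^2/2 + h*(INR k * (x-x0) - h*INR k*(INR k+1)/2)))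
      by (unfold cl, w; cbv beta; field).
    rewrite E, Haw, HP. field. }
  assert (eLc : forall k x, L_piece f10 f20 g10 x0 mu2 L1 L2 N (S k) x
     = mu_piece f10 f20 g10 x0 mu2 L1 L2 N 0 x + (L2-mu2) * (cl k x + (x - (x0 + INR k*h + a*h))^2/2)).
  { intros k x.
    assert (E : L_piece f10 f20 g10 x0 mu2 L1 L2 N (S k) x = mu_piece f10 f20 g10 x0 mu2 L1 L2 N (S k) x
       + (L2-mu2)/2*(x - (x0 + INR (S k)*h))^2) by (rewrite eL, emu; field).
    rewrite E, emuc. unfold cl, w; cbv beta. rewrite S_INR. field. }
  pose (b := fun j:nat => x0 + INR j*h + a*h).
  pose (c := fun j:nat => x0 + (INR j + 1)*h).
  assert (hbc : forall j, b j <= c j) by (intros j; unfold b, c; nra).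
  assert (hcb : forall j, c j <= b (S j)) by (intros j; unfold b, c; rewrite S_INR; nra).
  assert (Sfull : forall k x, x0 + INR k*h <= x -> Sq b c k x = cl k x).
  { induction k as [|k IH]; intros x Hx.
    - simpl. unfold cl; cbv beta. change (INR 0) with 0. field.
    - simpl Sq. rewrite S_INR in Hx. rewrite IH by nra.
      rewrite Rq_full by (apply hbc || (unfold c; lra)).
      unfold cl, b, c; cbv beta. rewrite S_INR. unfold w. field. }
  assert (Cfull : forall k x, x0 + INR k*h <= x -> Cq b c k x = INR k * w).
  { induction k as [|k IH]; intros x Hx.
    - simpl. field.
    - simpl Cq. rewrite S_INR in Hx. rewrite IH by nra.
      rewrite clq_full by (apply hbc || (unfold c; lra)).
      unfold b, c. rewrite S_INR. unfold w. field. }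
  pose (F := fun x => mu_piece f10 f20 g10 x0 mu2 L1 L2 N 0 x + (L2-mu2) * Sq b c N x).
  pose (D := fun x => mu2*(x - x0) + (g10 + L1*h) + (L2-mu2) * Cq b c N x).
  assert (Haux : forall fuel k x, (k + fuel = N)%nat -> x0 + INR k*h <= x ->
     f2_aux f10 f20 g10 x0 mu2 L1 L2 N k fuel x = F x).
  { induction fuel as [|fuel IH]; intros k x Hk Hx.
    - simpl f2_aux. assert (k = N) by lia. subst k.
      rewrite emuc. unfold F. rewrite (Sfull N x Hx). reflexivity.
    - simpl f2_aux. rewrite exb, exk.
      destruct (Rle_dec x (x0 + INR k*h + a*h)) as [H1|H1].
      + rewrite emuc. unfold F. rewrite (Sq_stop b c hbc hcb N k x) by (lia || (unfold b; lra)).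
        rewrite Sfull by lra. reflexivity.
      + destruct (Rle_dec x (x0 + INR (S k)*h)) as [H2|H2].
        * rewrite eLc. unfold F. rewrite S_INR in H2.
          rewrite (Sq_stop b c hbc hcb N (S k) x) by (lia || (unfold b; rewrite S_INR; nra)).
          simpl Sq. rewrite Sfull by lra. rewrite Rq_mid by (unfold b, c; lra). reflexivity.
        * apply IH; [lia|lra]. }
  assert (Hf2F : forall x, f2 x = F x).
  { intros x. unfold f2, f2fun. destruct (Rle_dec x x0) as [H1|H1].
    - unfold F. rewrite (Sq_stop b c hbc hcb N 0 x) by (lia || (unfold b; change (INR 0) with 0; nra)).
      simpl Sq. field.
    - apply Haux; [lia|change (INR 0) with 0; lra]. }
  assert (Hf : f2 = F) by (apply functional_extensionality; exact Hf2F).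
  clearbody f2. subst f2.
  set (KF := mu2/2 + (L2-mu2)*INR N/2).
  assert (Fbound : forall x p, mu2/2*(x-p)^2 <= F x - F p - D p*(x-p) <= KF*(x-p)^2).
  { intros x p.
    assert (E : mu_piece f10 f20 g10 x0 mu2 L1 L2 N 0 x - mu_piece f10 f20 g10 x0 mu2 L1 L2 N 0 p
       - (mu2*(p-x0) + (g10+L1*h))*(x-p) = mu2/2*(x-p)^2)
      by (rewrite !emu; change (INR 0) with 0; field).
    pose proof (Sq_bound b c hbc N x p) as [B1 B2].
    assert (E2 : F x - F p - D p*(x-p) = mu2/2*(x-p)^2 +
        (L2-mu2) * (Sq b c N x - Sq b c N p - Cq b c N p * (x-p))).
    { unfold F, D. rewrite <- E. field. }
    rewrite E2. split.
    - assert (0 <= (L2-mu2) * (Sq b c N x - Sq b c N p - Cq b c N p * (x-p)))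
        by (apply Rmult_le_pos; lra). lra.
    - assert ((L2-mu2) * (Sq b c N x - Sq b c N p - Cq b c N p * (x-p)) <= (L2-mu2) * (INR N * ((x - p) ^ 2 / 2)))
        by (apply Rmult_le_compat_l; lra).
      unfold KF. assert (KE : (mu2 / 2 + (L2 - mu2) * INR N / 2) * (x - p) ^ 2
          = mu2/2*(x-p)^2 + (L2-mu2) * (INR N * ((x - p) ^ 2 / 2))) by field. lra. }
  assert (HFabs : forall p y, Rabs (F y - F p - D p*(y-p)) <= KF*(y-p)^2).
  { intros p y. destruct (Fbound y p). pose proof (pow2_ge_0 (y-p)).
    rewrite Rabs_pos_eq by nra. lra. }
  assert (HdF : forall p, is_derive F p (D p)).
  { intros p. apply (quad_deriv F (D p) p KF). apply HFabs. }
  assert (Hf1 : forall z, f1 z = f1fun f10 g10 x0 L1 z) by reflexivity.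
  assert (Hf1q : forall y p, f1 y - f1 p - (L1*(p-x0)+g10)*(y-p) = L1/2*(y-p)^2).
  { intros y p. unfold f1, f1fun. field. }
  assert (Hf1abs : forall p y, Rabs (f1 y - f1 p - (L1*(p-x0)+g10)*(y-p)) <= L1/2*(y-p)^2).
  { intros p y. rewrite Hf1q. pose proof (pow2_ge_0 (y-p)). rewrite Rabs_pos_eq by nra. lra. }
  assert (Hdf1 : forall p, is_derive f1 p (L1*(p-x0)+g10)).
  { intros p. apply (quad_deriv f1 _ p (L1/2)). apply Hf1abs. }
  split; [|split].
  -
    split; [|split].
    + intros x. apply (quad_lsc f1 (L1*(x-x0)+g10) x (L1/2)). apply Hf1abs.
    + apply (support_convex _ (fun p => L1*(p-x0)+g10 - mu1*p)). intros x p.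
      pose proof (Hf1q x p). pose proof (pow2_ge_0 (x-p)).
      assert (mu1 / 2 * x ^ 2 - mu1 / 2 * p ^ 2 - mu1 * p * (x-p) = mu1/2*(x-p)^2) by field.
      assert (0 <= (L1 - mu1)/2 * (x-p)^2) by (apply Rmult_le_pos; lra).
      nra.
    + apply (support_convex _ (fun p => L1*p - (L1*(p-x0)+g10))). intros x p.
      pose proof (Hf1q x p).
      assert (L1 / 2 * x ^ 2 - L1 / 2 * p ^ 2 - L1 * p * (x-p) = L1/2*(x-p)^2) by field.
      nra.
  -
    split; [|split].
    + intros x. apply (quad_lsc F (D x) x KF). apply HFabs.
    + apply (support_convex _ (fun p => D p - mu2*p)). intros x p.
      destruct (Fbound x p).
      assert (mu2 / 2 * x ^ 2 - mu2 / 2 * p ^ 2 - mu2 * p * (x-p) = mu2/2*(x-p)^2) by field.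
      nra.
    + apply (mono_convex _ (fun p => L2*p - D p)).
      * intros p. apply (quad_deriv _ _ p (L2/2 + KF)). intros y.
        destruct (Fbound y p). pose proof (pow2_ge_0 (y-p)).
        assert (0 <= mu2/2*(y-p)^2) by (apply Rmult_le_pos; lra).
        assert (L2 / 2 * y ^ 2 - F y - (L2 / 2 * p ^ 2 - F p) - (L2 * p - D p) * (y - p)
            = L2/2*(y-p)^2 - (F y - F p - D p*(y-p))) by field.
        apply Rabs_le. nra.
      * intros x y Hxy. unfold D. pose proof (Cq_lip b c hbc hcb N x y Hxy).
        assert ((L2-mu2)*(Cq b c N y - Cq b c N x) <= (L2-mu2)*(y-x)) by (apply Rmult_le_compat_l; lra).
        nra.
  -
    intros y Hy0 Hstep.
    assert (Hsg : forall p g, subgrad F p g -> g = D p).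
    { intros p g Hs. assert (g - D p = 0); [|lra].
      apply (lin_zero _ KF). intros t. specialize (Hs (p + t)).
      destruct (Fbound (p+t) p) as [_ B].
      replace (p + t - p) with t in * by field. lra. }
    assert (Hargmin : forall g x', (forall w, f1 x' - g*x' <= f1 w - g*w) -> x' = x0 + (g - g10)/L1).
    { intros g x' Hm. assert (g - (L1*(x'-x0)+g10) = 0).
      { apply (lin_zero _ (L1/2)). intros t. specialize (Hm (x' + t)).
        pose proof (Hf1q (x'+t) x'). replace (x' + t - x') with t in * by field. nra. }
      field_simplify_eq; [lra|lra]. }
    assert (HDk : forall k, (k <= N)%nat -> D (x0 + INR k*h) = g10 + (INR k + 1)*(L1*h)).
    { intros k Hk. unfold D. rewrite (Cq_stop b c hbc hcb N k) by (lia || (unfold b; nra)).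
      rewrite Cfull by lra. unfold w.
      assert (E : (L2-mu2)*(INR k*((1-a)*h)) = (L2-mu2)*(1-a)*(INR k*h)) by field.
      rewrite E, Haw. field. }
    assert (Hy : forall k, (k <= N)%nat -> y k = x0 + INR k * h).
    { induction k as [|k IH]; intros Hk.
      - rewrite Hy0. change (INR 0) with 0. field.
      - destruct (Hstep k ltac:(lia)) as [g2 [Hsub Hmin]].
        rewrite IH in Hsub by lia. apply Hsg in Hsub. rewrite HDk in Hsub by lia.
        apply Hargmin in Hmin. rewrite Hmin, Hsub. rewrite S_INR. field. lra. }
    split.
    + intros k Hk. split.
      * exists (L1*(y k-x0)+g10). apply Hdf1.
      * exists (D (y k)). apply HdF.
    + rewrite (min_upto_const N _ ((L1*h)^2)).
      * rewrite HDel. field. lra.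
      * intros k Hk. rewrite (is_derive_unique _ _ _ (Hdf1 (y k))).
        rewrite (is_derive_unique _ _ _ (HdF (y k))).
        rewrite Hy, HDk by lia. field.
Qed.
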